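(* Let $U$ be a general quantum walk on a finite graph $G=(V,E)$ with auxiliary space of dimension $d$, such that for every basis state $|a,v\rangle$ the limiting distribution $\pi(\cdot|a,v)$ equals a fixed distribution $\pi$ (necessarily uniform). Let $\epsilon>0$ with $M=M_\epsilon<\infty$. An amplification step from vertex $v$ consists of: choosing $a\in\{1,\dots,d\}$ uniformly at random and $t\in\{0,\dots,M-1\}$ uniformly at random, preparing $|a,v\rangle$, applying $U^t$, and measuring the vertex. Starting from an arbitrary vertex $v_0$ and performing $k\ge1$ successive amplification steps (each starting from the vertex measured at the end of the previous one), the distribution $D_k$ of the final measured vertex satisfies $\|D_k-\pi\|\le\epsilon^k$.
   Context: $\mathcal H=\mathcal H_A\otimes\mathcal H_V$ with basis $|a,v\rangle$. A general quantum walk on $G$ is a unitary $U$ with $U|a,v\rangle$ supported on $|a',v'\rangle$ with $v'=v$ or $v'$ adjacent to $v$. $P_t(\cdot|a,v)$ is the vertex distribution of $U^t|a,v\rangle$, $\bar P_T=\frac1T\sum_{t=0}^{T-1}P_t$, $\pi(\cdot|a,v)=\lim_T\bar P_T(\cdot|a,v)$. Total variation $\|d_1-d_2\|=\sum_v|d_1(v)-d_2(v)|$. Mixing time $M_\epsilon=\min\{T\ge1:\forall t\ge T,\forall|a,v\rangle:\ \|\pi(\cdot|a,v)-\bar P_t(\cdot|a,v)\|\le\epsilon\}$. *)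

(* Defs.v *)
From HB Require Import structures.
From mathcomp Require Import all_boot all_order all_algebra.
From mathcomp Require Import all_classical all_reals all_analysis.
From mathcomp Require Import complex.
Set Implicit Arguments. Unset Strict Implicit. Unset Printing Implicit Defensive.
Import Order.TTheory GRing.Theory Num.Theory.
Local Open Scope ring_scope.

Section QW.
Variables (R : realType) (d n : nat).
Local Notation C := (complex R).

(* Hilbert space H_A (x) H_V with H_A = C^d, H_V = C^n (vertices 'I_n).
   The basis vector |a,v> is the coordinate with index mxvec_index a v.
   A linear operator is a square matrix whose column (a,v) is U|a,v>,
   i.e. entry (i, j) is <i|U|j>. *)
Definition qidx (a : 'I_d) (v : 'I_n) : 'I_(d * n) := mxvec_index a v.

Definition simple_graph (e : rel 'I_n) : Prop :=
  (forall u v, e u v = e v u) /\ (forall v, ~~ e v v).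

Definition general_quantum_walk (e : rel 'I_n) (U : 'M[C]_(d * n)) : Prop :=
  U \is unitarymx /\
  forall a v a' v', U (qidx a' v') (qidx a v) != 0 -> (v' == v) || e v v'.

Definition Upow (U : 'M[C]_(d * n)) (t : nat) : 'M[C]_(d * n) :=
  iter t (mulmx U) 1%:M.

Definition sqmod (z : C) : R := (complex.Re z) ^+ 2 + (complex.Im z) ^+ 2.

Definition Pt (U : 'M[C]_(d * n)) (t : nat) (a : 'I_d) (v w : 'I_n) : R :=
  \sum_(a' < d) sqmod (Upow U t (qidx a' w) (qidx a v)).

Definition Pbar (U : 'M[C]_(d * n)) (T : nat) (a : 'I_d) (v w : 'I_n) : R :=
  T%:R^-1 * \sum_(t < T) Pt U t a v w.

(* total variation (sum of absolute differences, as in the paper) *)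
Definition tvd (D1 D2 : 'I_n -> R) : R := \sum_(w < n) `|D1 w - D2 w|.

Definition mixed_from (U : 'M[C]_(d * n)) (pi : 'I_n -> R) (eps : R) (T : nat) : Prop :=
  forall t, (T <= t)%N -> forall a v, tvd pi (Pbar U t a v) <= eps.

(* M is the mixing time M_eps (the minimum, which exists, i.e. M_eps < oo) *)
Definition is_mixing_time (U : 'M[C]_(d * n)) (pi : 'I_n -> R) (eps : R) (M : nat) : Prop :=
  (1 <= M)%N /\ mixed_from U pi eps M /\
  (forall T, (1 <= T)%N -> mixed_from U pi eps T -> (M <= T)%N).

Definition amp_step (U : 'M[C]_(d * n)) (M : nat) (v w : 'I_n) : R :=
  \sum_(a < d) \sum_(t < M) (d%:R^-1 * M%:R^-1 * Pt U t a v w).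

Fixpoint amp_dist (U : 'M[C]_(d * n)) (M : nat) (v0 : 'I_n) (k : nat) : 'I_n -> R :=
  match k with
  | 0 => fun w => if w == v0 then 1 else 0
  | k'.+1 => fun w => \sum_(u < n) amp_dist U M v0 k' u * amp_step U M u w
  end.

End QW.

(* Main.v *)
Require Import Defs.
From HB Require Import structures.
From mathcomp Require Import all_boot all_order all_algebra.
From mathcomp Require Import all_classical all_reals all_analysis.
From mathcomp Require Import complex.
Import Order.TTheory GRing.Theory Num.Theory.
Import numFieldNormedType.Exports.
Local Open Scope classical_set_scope.
Local Open Scope ring_scope.

Section Aux.
Variables (R : realType) (d n : nat).
Local Notation C := (complex R).

Lemma sqmod_ge0 (z : C) : 0 <= sqmod z.
Proof. by rewrite /sqmod addr_ge0 // sqr_ge0. Qed.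

Lemma sqmodE (z : C) : (sqmod z)%:C%C = z * z^*.
Proof. by rewrite /sqmod add_Re2_Im2 normCK. Qed.

Lemma sqmod_conj (z : C) : sqmod z^* = sqmod z.
Proof. by apply: (@complexI R); rewrite !sqmodE conjCK mulrC. Qed.

Lemma row_norm m (A : 'M[C]_m) i : A \is unitarymx -> \sum_j sqmod (A i j) = 1.
Proof.
move=> /unitarymxP H; apply: (@complexI R).
have := congr1 (fun M : 'M[C]_m => M i i) H; rewrite !mxE eqxx /= => E; idtac. 
rewrite rmorph_sum.
transitivity (\sum_(j < m) A i j * (A ^t*)%sesqui j i); last by rewrite E.
by apply: eq_bigr => j _; rewrite !mxE; apply: sqmodE.
Qed.

Lemma col_norm m (A : 'M[C]_m) j : A \is unitarymx -> \sum_i sqmod (A i j) = 1.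
Proof.
rewrite -trmxC_unitary => HA; rewrite -(@row_norm _ _ j HA).
by apply: eq_bigr => i _; rewrite !mxE sqmod_conj.
Qed.

Lemma Upow_unitary (U : 'M[C]_(d * n)) t : U \is unitarymx -> Upow U t \is unitarymx.
Proof.
move=> HU; elim: t => [|t IH] /=.
  by apply/unitarymxP; rewrite trmx1 map_mx1 mul1mx.
exact: mul_unitarymx.
Qed.

Lemma sum_qidx (f : 'I_(d * n) -> R) :
  \sum_(i < d * n) f i = \sum_(a < d) \sum_(w < n) f (qidx a w).
Proof.
rewrite (reindex _ (curry_mxvec_bij _ _)) /= pair_bigA /=.
by apply: eq_bigr => -[a w].
Qed.

End Aux.
Section Markov.
Variables (R : realType) (n : nat).
Variables (K : 'I_n -> 'I_n -> R) (pi : 'I_n -> R) (eps : R) (D : nat -> 'I_n -> R).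
Hypothesis Krow : forall u, \sum_w K u w = 1.
Hypothesis piK : forall w, \sum_u pi u * K u w = pi w.
Hypothesis pisum : \sum_u pi u = 1.
Hypothesis Ktv : forall u, tvd (K u) pi <= eps.
Hypothesis Drec : forall k w, D k.+1 w = \sum_u D k u * K u w.
Hypothesis D0 : \sum_w D 0 w = 1.

Lemma Dsum k : \sum_w D k w = 1.
Proof.
elim: k => [//|k IH].
under eq_bigr do rewrite Drec.
rewrite exchange_big /= -IH; apply: eq_bigr => u _.
by rewrite -mulr_sumr Krow mulr1.
Qed.

Lemma Dstep k : tvd (D k.+1) pi <= eps * tvd (D k) pi.
Proof.
have E w : D k.+1 w - pi w = \sum_u (D k u - pi u) * (K u w - pi w).
  have Z : \sum_u (D k u - pi u) = 0 by rewrite sumrB Dsum pisum subrr.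
  under eq_bigr do rewrite mulrBr.
  rewrite sumrB -mulr_suml Z mul0r subr0.
  under eq_bigr do rewrite mulrBl.
  by rewrite sumrB piK Drec.
rewrite /tvd.
apply: (@le_trans _ _ (\sum_w \sum_u `|D k u - pi u| * `|K u w - pi w|)).
  apply: ler_sum => w _; rewrite E.
  apply: (le_trans (ler_norm_sum _ _ _)).
  by apply: ler_sum => u _; rewrite normrM.
rewrite exchange_big /= mulr_sumr; apply: ler_sum => u _.
rewrite -mulr_sumr mulrC; apply: ler_wpM2r => //.
exact: Ktv.
Qed.

End Markov.
Section QW2.
Variables (R : realType) (d n : nat) (U : 'M[complex R]_(d * n)).
Hypothesis HU : U \is unitarymx.

Lemma Pt_ge0 t a v w : 0 <= Pt U t a v w.
Proof. by apply: sumr_ge0 => *; exact: sqmod_ge0. Qed.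

Lemma sum_Pt_w t a v : \sum_w Pt U t a v w = 1.
Proof.
rewrite /Pt exchange_big /=.
rewrite -(@sum_qidx R d n (fun i => sqmod (Upow U t i (qidx a v)))).
apply: col_norm; exact: Upow_unitary.
Qed.

Lemma sum_Pt_av t w : \sum_a \sum_v Pt U t a v w = d%:R.
Proof.
rewrite /Pt.
under eq_bigr do rewrite exchange_big /=.
rewrite exchange_big /=.
transitivity (\sum_(a' < d) (1 : R)); last by rewrite sumr_const card_ord.
apply: eq_bigr => a' _.
rewrite -(@sum_qidx R d n (fun j => sqmod (Upow U t (qidx a' w) j))).
apply: row_norm; exact: Upow_unitary.
Qed.

End QW2.

Theorem mainTheorem10 (R : realType) (d n : nat) (e : rel 'I_n)
  (U : 'M[complex R]_(d * n)) (pi : 'I_n -> R) (eps : R) (M : nat)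
  (v0 : 'I_n) (k : nat) :
  (0 < d)%N ->
  simple_graph e ->
  general_quantum_walk e U ->
  (forall (a : 'I_d) (v w : 'I_n),
      (fun T : nat => Pbar U T a v w) @ \oo --> pi w) ->
  0 < eps ->
  is_mixing_time U pi eps M ->
  (1 <= k)%N ->
  tvd (amp_dist U M v0 k) pi <= eps ^+ k.
Proof.
move=> d0 _ [HU _] Hlim eps0 [M1 [Hmix _]] k1.
have n0 : (0 < n)%N by exact: (leq_ltn_trans (leq0n _) (ltn_ord v0)).
have dR : d%:R != 0 :> R by rewrite pnatr_eq0 -lt0n.
have nR : n%:R != 0 :> R by rewrite pnatr_eq0 -lt0n.
have MR : M%:R != 0 :> R by rewrite pnatr_eq0 -lt0n.
have piE w : pi w = n%:R^-1.
  have H1 : (fun T : nat => \sum_(a < d) \sum_(v < n) Pbar U T a v w) @ \oo -->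
            \sum_(a < d) \sum_(v < n) pi w.
    apply: (@cvg_big R _ +%R 0 xpredT add_continuous _ _ _
      (fun a T => \sum_(v < n) Pbar U T a v w)) => // a _.
    apply: (@cvg_big R _ +%R 0 xpredT add_continuous _ _ _
      (fun v T => Pbar U T a v w)) => // v _.
  have H2 : (fun T : nat => \sum_(a < d) \sum_(v < n) Pbar U T a v w) @ \oo -->
            (d%:R : R).
    apply: cvg_near_cst; exists 1%N => // T /= T1.
    rewrite /Pbar; under eq_bigr do rewrite -mulr_sumr.
    rewrite -mulr_sumr; under eq_bigr do rewrite exchange_big /=.
    rewrite exchange_big /=.
    under eq_bigr do rewrite (@sum_Pt_av R d n U HU).
    by rewrite sumr_const card_ord mulrC -[_ *+ T]mulr_natr mulfK // pnatr_eq0 -lt0n.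
  have Heq : \sum_(a < d) \sum_(v < n) pi w = d%:R.
    apply: (cvg_unique _ H1 H2); exact: norm_hausdorff.
  move: Heq; rewrite !sumr_const !card_ord -mulrnA => Heq.
  apply: (mulfI (x := (d * n)%:R)); first by rewrite pnatr_eq0 muln_eq0 negb_or -!lt0n d0 n0.
  rewrite [in RHS]natrM -mulrA mulfV // mulr1 -Heq mulr_natl mulnC.
  done.
set K := amp_step U M.
have Kge0 u w : 0 <= K u w.
  apply: sumr_ge0 => a _; apply: sumr_ge0 => t _.
  by apply: mulr_ge0; [apply: mulr_ge0; rewrite invr_ge0 ler0n|exact: Pt_ge0].
have Krow u : \sum_w K u w = 1.
  rewrite /K /amp_step exchange_big /=.
  under eq_bigr do rewrite exchange_big /=.
  under eq_bigr do under eq_bigr do rewrite -mulr_sumr (@sum_Pt_w R d n U HU) mulr1.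
  by rewrite !sumr_const !card_ord -mulrnA -[_ *+ (M * d)]mulr_natr natrM mulrA divfK // mulVf.
have Kcol w : \sum_u K u w = 1.
  rewrite /K /amp_step exchange_big /=.
  under eq_bigr do rewrite exchange_big /=.
  rewrite exchange_big /=.
  under eq_bigr do under eq_bigr do rewrite -mulr_sumr.
  under eq_bigr do rewrite -mulr_sumr (@sum_Pt_av R d n U HU).
  by rewrite sumr_const card_ord -[_ *+ M]mulr_natr mulrAC divfK // mulVf.
have piK w : \sum_u pi u * K u w = pi w.
  under eq_bigr do rewrite piE.
  by rewrite -mulr_sumr Kcol mulr1 piE.
have pisum : \sum_u pi u = 1.
  under eq_bigr do rewrite piE.
  by rewrite sumr_const card_ord -[_ *+ n]mulr_natr mulVf.
have Ktv u : tvd (K u) pi <= eps.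
  have KE w : K u w - pi w = d%:R^-1 * \sum_a (Pbar U M a u w - pi w).
    rewrite sumrB mulrBr; congr (_ - _).
      rewrite /K /amp_step /Pbar mulr_sumr; apply: eq_bigr => a _.
      by rewrite !mulr_sumr; apply: eq_bigr => t _; rewrite mulrA.
    by rewrite sumr_const card_ord -[pi w *+ d]mulr_natr mulrCA mulVf // mulr1.
  rewrite /tvd.
  apply: (@le_trans _ _ (\sum_w d%:R^-1 * \sum_a `|Pbar U M a u w - pi w|)).
    apply: ler_sum => w _; rewrite KE normrM ger0_norm ?invr_ge0 ?ler0n //.
    by apply: ler_wpM2l; [rewrite invr_ge0 ler0n|exact: ler_norm_sum].
  rewrite -mulr_sumr exchange_big /=.
  apply: (@le_trans _ _ (d%:R^-1 * \sum_(a < d) eps)).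
    apply: ler_wpM2l; first by rewrite invr_ge0 ler0n.
    apply: ler_sum => a _.
    apply: le_trans (Hmix M (leqnn M) a u).
    by rewrite le_eqVlt; apply/orP; left; apply/eqP; apply: eq_bigr => w _; rewrite distrC.
  by rewrite sumr_const card_ord -[eps *+ d]mulr_natr mulrCA mulVf // mulr1.
pose D := amp_dist U M v0.
have Drec k' w : D k'.+1 w = \sum_u D k' u * K u w by [].
have D0 : \sum_w D 0%N w = 1.
  by rewrite (bigD1 v0) //= /D /= eqxx big1 ?addr0 // => w /negbTE ->.
have D1E w : D 1%N w = K v0 w.
  rewrite Drec (bigD1 v0) //= /D /= eqxx mul1r big1 ?addr0 // => u /negbTE ->.
  by rewrite mul0r.
have D1 : tvd (D 1%N) pi <= eps.
  rewrite /tvd; under eq_bigr do rewrite D1E.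
  exact: Ktv.
have eps0' : 0 <= eps by apply: ltW.
elim: k k1 => [//|k IH] _.
case: k IH => [_|k IH]; first by rewrite expr1.
apply: (le_trans (@Dstep R n K pi eps D Krow piK pisum Ktv Drec D0 k.+1)).
by rewrite exprS ler_wpM2l // IH.
Qed.
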